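(* Let $x,y$ be non-commuting indeterminates and $C=xyx^{-1}y^{-1}$. Let $(R_n)_{n\in\mathbb Z}$ be the solution of $$R_{n+1}CR_{n-1}=R_n^2+1\qquad(n\in\mathbb Z)$$ with $R_0=yxy^{-1}$ and $R_1=y$. Then for all $n\ge 0$, $R_n$ is a Laurent polynomial in $x,y$ with only non-negative integer coefficients.
   Context: Work in the free skew field (non-commutative rational functions) over $\mathbb C$ generated by $x,y$. A Laurent polynomial in $x,y$ is a $\mathbb Z$-linear combination of words in $x^{\pm1},y^{\pm1}$. *)

(* Defs.v *)
(* The integral group ring Z[F(x,y)] of the free group on
   x, y (= Laurent polynomials in non-commuting x, y), built as formal
   integer combinations of words modulo free reduction. *)
From mathcomp Require Import all_boot all_order all_algebra.
Set Implicit Arguments. Unset Strict Implicit. Unset Printing Implicit Defensive.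
Import GRing.Theory Num.Theory.
Local Open Scope ring_scope.

(* A letter: (generator, inverted?) ; generator false = x, true = y. *)
Definition letter := (bool * bool)%type.
Definition word := seq letter.

Definition cancels (a b : letter) : bool := (a.1 == b.1) && (a.2 != b.2).

Fixpoint freduce (w : word) : word :=
  match w with
  | [::] => [::]
  | a :: s =>
      match freduce s with
      | b :: r => if cancels a b then r else a :: b :: r
      | [::] => [:: a]
      end
  end.

(* Laurent polynomial = formal Z-combination of words (a representative). *)
Definition lpoly := seq (int * word).

Definition lcoef (p : lpoly) (w : word) : int :=
  \sum_(e <- p | freduce e.2 == w) e.1.

(* equality in the group ring Z[F_2] *)
Definition leq_lp (p q : lpoly) : Prop := forall w, lcoef p w = lcoef q w.

Definition ladd (p q : lpoly) : lpoly := p ++ q.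
Definition lmul (p q : lpoly) : lpoly :=
  [seq (e.1 * f.1, e.2 ++ f.2) | e <- p, f <- q].
Definition lone : lpoly := [:: (1%:Z, [::])].
Definition lword (w : word) : lpoly := [:: (1%:Z, w)].

Definition X : letter := (false, false).
Definition Xi : letter := (false, true).
Definition Y : letter := (true, false).
Definition Yi : letter := (true, true).

Definition Cw : lpoly := lword [:: X; Y; Xi; Yi].

Definition nonneg_lp (p : lpoly) : Prop := forall w, 0 <= lcoef p w.

(* Main.v *)
Require Import Defs.
From mathcomp Require Import all_boot all_order all_algebra.
From mathcomp Require Import zify.
From Stdlib Require Import Setoid Morphisms.
Set Implicit Arguments. Unset Strict Implicit. Unset Printing Implicit Defensive.
Import GRing.Theory Num.Theory.

Section Red.
Definition push (a : letter) (w : word) : word :=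
  match w with b :: r => if cancels a b then r else a :: b :: r | [::] => [:: a] end.

Lemma freduce_cons a s : freduce (a :: s) = push a (freduce s).
Proof. by []. Qed.

Fixpoint reduced (w : word) : bool :=
  match w with a :: ((b :: _) as s) => ~~ cancels a b && reduced s | _ => true end.

Lemma reduced_tail a s : reduced (a :: s) -> reduced s.
Proof. by case: s => //= b s /andP[]. Qed.

Lemma push_reduced a w : reduced w -> reduced (push a w).
Proof.
case: w => [|b r] //= H; case: ifP => h; first exact: reduced_tail H.
by rewrite /= h H.
Qed.

Lemma freduce_reduced w : reduced (freduce w).
Proof. elim: w => [|a s IH] //=; rewrite -/(push a (freduce s)); exact: push_reduced. Qed.

Lemma freduce_id w : reduced w -> freduce w = w.
Proof.
elim: w => [|a s IH] // H; rewrite freduce_cons IH; last exact: reduced_tail H.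
by case: s H {IH} => [|b r] //= /andP[/negbTE -> _].
Qed.

Lemma cancels_trans a b c : cancels a b -> cancels b c -> a = c.
Proof.
by case: a b c => [[] []] [[] []] [[] []].
Qed.

Lemma push_cancel a b s : cancels a b -> reduced s -> push a (push b s) = s.
Proof.
move=> hab; case: s => [|c r] H.
  by rewrite /push hab.
rewrite [push b _]/push; case hbc: (cancels b c); last by rewrite /push hab.
have eac := cancels_trans hab hbc; subst c.
by case: r H => [|d r] //= /andP[/negbTE -> _].
Qed.

Lemma freduce_cat u v : freduce (u ++ v) = foldr push (freduce v) u.
Proof. by elim: u => [|a u IH] //=; rewrite -IH. Qed.

Lemma foldr_push_reduced t u : reduced t -> reduced (foldr push t u).
Proof. by move=> H; elim: u => [|a u IH] //=; apply: push_reduced. Qed.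

Lemma foldr_push_reduce u t : reduced t -> foldr push t u = foldr push t (freduce u).
Proof.
move=> Ht; elim: u => [|a u IH] //=; rewrite IH.
case: (freduce u) => [|b r] //=.
case: ifP => hab //; apply: push_cancel => //; exact: foldr_push_reduced.
Qed.

Lemma freduce_catl u v : freduce (u ++ v) = freduce (freduce u ++ v).
Proof. rewrite !freduce_cat; apply: foldr_push_reduce; exact: freduce_reduced. Qed.

Lemma freduce_catr u v : freduce (u ++ v) = freduce (u ++ freduce v).
Proof. by rewrite !freduce_cat (freduce_id (freduce_reduced v)). Qed.
End Red.

Section Coef.
Local Open Scope ring_scope.

Lemma lcoef_nil w : lcoef [::] w = 0.
Proof. by rewrite /lcoef big_nil. Qed.

Lemma lcoef_cons e p w :
  lcoef (e :: p) w = (if freduce e.2 == w then e.1 else 0) + lcoef p w.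
Proof. by rewrite /lcoef big_cons; case: ifP; rewrite ?add0r. Qed.

Lemma lcoef_cat p q w : lcoef (p ++ q) w = lcoef p w + lcoef q w.
Proof. by rewrite /lcoef big_cat. Qed.

Lemma lcoef_add p q w : lcoef (ladd p q) w = lcoef p w + lcoef q w.
Proof. exact: lcoef_cat. Qed.

Definition lneg (p : lpoly) : lpoly := [seq (- e.1, e.2) | e <- p].

Lemma lcoef_neg p w : lcoef (lneg p) w = - lcoef p w.
Proof.
elim: p => [|e p IH]; first by rewrite lcoef_nil oppr0.
rewrite /lneg /= !lcoef_cons -/(lneg p) IH /= opprD; case: ifP => _ //; by rewrite oppr0.
Qed.

Lemma lcoef_scale e1 u q w :
  lcoef [seq (e1 * f.1, u ++ f.2) | f <- q] w =
  \sum_(f <- q) (if freduce (u ++ f.2) == w then e1 * f.1 else 0).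
Proof.
elim: q => [|f q IH]; first by rewrite lcoef_nil big_nil.
by rewrite /= lcoef_cons IH big_cons.
Qed.

Lemma lcoef_mul p q w : lcoef (lmul p q) w =
  \sum_(e <- p) \sum_(f <- q) (if freduce (e.2 ++ f.2) == w then e.1 * f.1 else 0).
Proof.
elim: p => [|e p IH]; first by rewrite lcoef_nil big_nil.
by rewrite big_cons -IH /lmul /= lcoef_cat lcoef_scale.
Qed.

Lemma sum_pick (s : seq word) (k : word) (F : word -> int) :
  uniq s -> k \in s -> \sum_(u <- s) (if k == u then F u else 0) = F k.
Proof.
elim: s => [|x s IH] //= /andP[xs us]; rewrite in_cons big_cons.
case: (eqVneq k x) => [-> _|nkx /= ks].
  rewrite big1_seq ?addr0 // => u /andP[_ us'].
  by case: eqP => // eku; rewrite eku us' in xs.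
by rewrite IH // add0r.
Qed.

Lemma lcoef_sum_h p (h : word -> int) s : uniq s ->
  {subset [seq freduce e.2 | e <- p] <= s} ->
  \sum_(e <- p) e.1 * h (freduce e.2) = \sum_(u <- s) lcoef p u * h u.
Proof.
move=> us; elim: p => [|e p IH] sub.
  by rewrite big_nil big1_seq // => u _; rewrite lcoef_nil mul0r.
rewrite big_cons IH; last by move=> u hu; apply: sub; rewrite /= in_cons hu orbT.
under [X in _ = X]eq_bigr => u _ do rewrite lcoef_cons mulrDl.
rewrite big_split /=; congr (_ + _).
rewrite (eq_bigr (fun u => if freduce e.2 == u then e.1 * h u else 0)); last first.
  by move=> u _; case: ifP => //; rewrite mul0r.
rewrite (@sum_pick s (freduce e.2) (fun u => e.1 * h u)) //.
by apply: sub; rewrite /= in_cons eqxx.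
Qed.

Lemma lh_cong p q (h : word -> int) : leq_lp p q ->
  \sum_(e <- p) e.1 * h (freduce e.2) = \sum_(e <- q) e.1 * h (freduce e.2).
Proof.
move=> H.
set s := undup [seq freduce e.2 | e <- p ++ q].
have us : uniq s by apply: undup_uniq.
rewrite (@lcoef_sum_h p h s) // ?(@lcoef_sum_h q h s) //.
- by apply: eq_bigr => u _; rewrite H.
- by move=> u hu; rewrite mem_undup map_cat mem_cat hu orbT.
- by move=> u hu; rewrite mem_undup map_cat mem_cat hu.
Qed.

Lemma lmul_congl p p' q : leq_lp p p' -> leq_lp (lmul p q) (lmul p' q).
Proof.
move=> H w; rewrite !lcoef_mul.
pose h u := \sum_(f <- q) (if freduce (u ++ f.2) == w then f.1 else 0).
have E r : \sum_(e <- r) \sum_(f <- q) (if freduce (e.2 ++ f.2) == w then e.1 * f.1 else 0)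
   = \sum_(e <- r) e.1 * h (freduce e.2).
  apply: eq_bigr => e _; rewrite /h big_distrr /=; apply: eq_bigr => f _.
  by rewrite -freduce_catl; case: ifP; rewrite ?mulr0.
by rewrite !E; apply: lh_cong.
Qed.

Lemma lmul_congr p q q' : leq_lp q q' -> leq_lp (lmul p q) (lmul p q').
Proof.
move=> H w; rewrite !lcoef_mul exchange_big [RHS]exchange_big.
pose h u := \sum_(e <- p) (if freduce (e.2 ++ u) == w then e.1 else 0).
have E r : \sum_(f <- r) \sum_(e <- p) (if freduce (e.2 ++ f.2) == w then e.1 * f.1 else 0)
   = \sum_(f <- r) f.1 * h (freduce f.2).
  apply: eq_bigr => f _; rewrite /h big_distrr /=; apply: eq_bigr => e _.
  by rewrite -freduce_catr; case: ifP; rewrite ?mulr0 // mulrC.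
by rewrite !E; apply: lh_cong.
Qed.

End Coef.

Section Laws.
Local Open Scope ring_scope.

Lemma leq_lp_refl p : leq_lp p p. Proof. by []. Qed.
Lemma leq_lp_sym p q : leq_lp p q -> leq_lp q p. Proof. by move=> H w; rewrite H. Qed.
Lemma leq_lp_trans p q r : leq_lp p q -> leq_lp q r -> leq_lp p r.
Proof. by move=> H1 H2 w; rewrite H1 H2. Qed.

Lemma ladd_cong p p' q q' : leq_lp p p' -> leq_lp q q' -> leq_lp (ladd p q) (ladd p' q').
Proof. by move=> H1 H2 w; rewrite !lcoef_add H1 H2. Qed.

Lemma lneg_cong p p' : leq_lp p p' -> leq_lp (lneg p) (lneg p').
Proof. by move=> H w; rewrite !lcoef_neg H. Qed.

Lemma lmul_cong p p' q q' : leq_lp p p' -> leq_lp q q' -> leq_lp (lmul p q) (lmul p' q').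
Proof. move=> H1 H2; apply: leq_lp_trans (lmul_congl _ H1) (lmul_congr _ H2). Qed.

Lemma lmul_cons e p q : lmul (e :: p) q = [seq (e.1 * f.1, e.2 ++ f.2) | f <- q] ++ lmul p q.
Proof. by []. Qed.

Lemma lmul_catl p1 p2 q : lmul (p1 ++ p2) q = lmul p1 q ++ lmul p2 q.
Proof. by elim: p1 => [|e p1 IH] //=; rewrite !lmul_cons IH catA. Qed.

Lemma lmulA p q r : lmul (lmul p q) r = lmul p (lmul q r).
Proof.
elim: p => [|e p IH] //; rewrite !lmul_cons lmul_catl IH; congr (_ ++ _).
clear IH; elim: q => [|f q IHq] //. rewrite map_cons [LHS]lmul_cons [in RHS]lmul_cons IHq map_cat -map_comp; congr (_ ++ _).
by apply: eq_map => g /=; rewrite mulrA catA.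
Qed.

Lemma lmulDl p q r : lmul (ladd p q) r = ladd (lmul p r) (lmul q r).
Proof. exact: lmul_catl. Qed.

Lemma lmulNl p q : lmul (lneg p) q = lneg (lmul p q).
Proof.
elim: p => [|e p IH] //; rewrite /lneg /= lmul_cons -/(lneg p) IH /lneg map_cat -map_comp.
by congr (_ ++ _); apply: eq_map => f /=; rewrite mulNr.
Qed.

Lemma lmulNr p q : lmul p (lneg q) = lneg (lmul p q).
Proof.
elim: p => [|e p IH] //; rewrite !lmul_cons IH /lneg map_cat -!map_comp.
by congr (_ ++ _); apply: eq_map => f /=; rewrite mulrN.
Qed.

Lemma lmulDr p q r : leq_lp (lmul p (ladd q r)) (ladd (lmul p q) (lmul p r)).
Proof.
move=> w; rewrite lcoef_add !lcoef_mul -big_split /=; apply: eq_bigr => e _.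
by rewrite /ladd big_cat.
Qed.

Lemma lmul1l p : lmul lone p = p.
Proof.
rewrite lmul_cons cats0; elim: p => [|[c u] p IH] //=; by rewrite IH mul1r.
Qed.

Lemma lmul1r p : lmul p lone = p.
Proof. by elim: p => [|[c u] p IH] //=; rewrite lmul_cons IH /= mulr1 cats0. Qed.

Lemma lnegD p q : lneg (ladd p q) = ladd (lneg p) (lneg q).
Proof. exact: map_cat. Qed.

End Laws.

#[global] Instance leq_lp_Equiv : Equivalence leq_lp.
Proof. split; [exact: leq_lp_refl| exact: leq_lp_sym | exact: leq_lp_trans]. Qed.
#[global] Instance ladd_Proper : Proper (respectful leq_lp (respectful leq_lp leq_lp)) ladd.
Proof. move=> ? ? ? ? ? ?; exact: ladd_cong. Qed.
#[global] Instance lmul_Proper : Proper (respectful leq_lp (respectful leq_lp leq_lp)) lmul.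
Proof. move=> ? ? ? ? ? ?; exact: lmul_cong. Qed.
#[global] Instance lneg_Proper : Proper (respectful leq_lp leq_lp) lneg.
Proof. move=> ? ? ?; exact: lneg_cong. Qed.

Lemma test (p q r s : lpoly) : leq_lp q r -> leq_lp (lmul p (lmul s q)) (lmul p (lmul s r)).
Proof. move=> H. rewrite H. reflexivity. Qed.
Lemma test2 (p q r s : lpoly) : leq_lp (lmul p (lmul s (ladd q r))) (lmul p (ladd (lmul s q) (lmul s r))).
Proof. rewrite lmulDr. reflexivity. Qed.

Lemma lnegK p : lneg (lneg p) = p.
Proof. by elim: p => [|[c u] p IH] //=; rewrite -/(lneg p) IH opprK. Qed.

Ltac lnorm := repeat first [rewrite lmulA | rewrite lmulDl | rewrite lmulNl | rewrite lmulNr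
  | rewrite lnegD | rewrite lnegK | rewrite lmul1l | rewrite lmul1r | rewrite lmulDr].
Ltac lnormH H := repeat first [rewrite lmulA in H | rewrite lmulDl in H | rewrite lmulNl in H
  | rewrite lmulNr in H | rewrite lnegD in H | rewrite lnegK in H | rewrite lmul1l in H
  | rewrite lmul1r in H | rewrite lmulDr in H].
Ltac lfin := let w := fresh "w" in move=> w;
  repeat match goal with H : leq_lp _ _ |- _ => move: (H w); clear H end;
  rewrite ?lcoef_add ?lcoef_neg; lia.

Section Abstract.
Variables (K C E : lpoly) (r : nat -> lpoly).
Hypothesis hCE : leq_lp (lmul C E) lone.
Hypothesis hEC : leq_lp (lmul E C) lone.
Hypothesis hL : forall n, leq_lp (r n.+2) (ladd (lmul (r n.+1) K) (lneg (lmul (r n) E))).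

Definition Aprop n := leq_lp (ladd (lmul K (lmul C (r n.+1))) (lmul (r n) E))
                             (ladd (lmul (r n.+1) K) (lmul C (r n))).
Definition Bprop n := leq_lp (ladd (lmul K (lmul C (r n))) (lmul C (lmul (r n.+1) C)))
                             (ladd (r n.+1) (lmul C (lmul (r n) (lmul K C)))).
Definition Dprop n := leq_lp (lmul (lmul (r n.+2) C) (r n))
                             (ladd (lmul (r n.+1) (r n.+1)) lone).

Lemma hCEp p : leq_lp (lmul C (lmul E p)) p.
Proof. by rewrite -lmulA hCE lmul1l. Qed.
Lemma hECp p : leq_lp (lmul E (lmul C p)) p.
Proof. by rewrite -lmulA hEC lmul1l. Qed.

Ltac lnormC := repeat first [rewrite hCEp | rewrite hECp | rewrite hCE | rewrite hEC | progress lnorm].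
Ltac lnormCH H := repeat first [rewrite hCEp in H | rewrite hECp in H | rewrite hCE in H
  | rewrite hEC in H | progress lnormH H].

Lemma stepB n : Aprop n -> Bprop n.+1.
Proof.
rewrite /Aprop /Bprop => hA.
rewrite (hL n); lnormC; lnormCH hA; lfin.
Qed.

Lemma stepA n : Aprop n -> Bprop n -> Aprop n.+1.
Proof.
rewrite /Aprop /Bprop => hA hB.
have h1 := lmul_congl K hA. have h2 := lmul_congl E hB.
clear hA hB.
rewrite (hL n); lnormC; lnormCH h1; lnormCH h2; lfin.
Qed.

Lemma stepD n : Aprop n -> Dprop n -> Dprop n.+1.
Proof.
rewrite /Aprop /Dprop => hA hD.
have h1 := lmul_congr (r n.+2) hA. have h3 := lmul_congr (r n.+2) (hL n).
clear hA.
rewrite (hL n.+1); lnormC; lnormCH h1; lnormCH h3; lnormCH hD; lfin.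
Qed.

Lemma abstract_all : Aprop 0 -> Bprop 0 -> Dprop 0 -> forall n, Dprop n.
Proof.
move=> hA hB hD n.
suff: [/\ Aprop n, Bprop n & Dprop n] by case.
elim: n => [|n [hA' hB' hD']]; first by split.
split; [exact: stepA | exact: stepB | exact: stepD].
Qed.
End Abstract.

Definition la : lpoly := lword [:: Y; Xi].
Definition lb : lpoly := lword [:: X; X; Yi; Xi].
Definition lc : lpoly := lword [:: Yi; Xi].
Definition R0 : lpoly := lword [:: Y; X; Yi].

Fixpoint st (n : nat) : lpoly * lpoly :=
  match n with
  | 0 => (R0, [::])
  | n'.+1 => let p := st n' in
             let r' := ladd (lmul p.1 la) p.2 in
             (r', ladd (lmul p.2 lb) (lmul r' lc))
  end.

Definition PP n := (st n).1.
Definition KK := ladd la (ladd lb lc).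
Definition EE := lmul la lb.

Lemma st_S n : st n.+1 = (ladd (lmul (st n).1 la) (st n).2,
  ladd (lmul (st n).2 lb) (lmul (ladd (lmul (st n).1 la) (st n).2) lc)).
Proof. by []. Qed.

Lemma PP_lin n : leq_lp (PP n.+2) (ladd (lmul (PP n.+1) KK) (lneg (lmul (PP n) EE))).
Proof.
rewrite /PP /KK /EE !st_S.
case: (st n) => r0 z0; move: la lb lc => a b c /=.
lnorm; lfin.
Qed.

Section Comp.
Local Open Scope ring_scope.
Definition lcoefc (p : lpoly) (u : word) : int :=
  foldr (fun e acc => (if freduce e.2 == u then e.1 else 0) + acc) 0 p.

Lemma lcoefcE p u : lcoef p u = lcoefc p u.
Proof. by elim: p => [|e p IH]; rewrite ?lcoef_nil ?lcoef_cons ?IH. Qed.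

Definition lpeqb (p q : lpoly) : bool :=
  all (fun u => lcoefc p u == lcoefc q u) [seq freduce e.2 | e <- p ++ q].

Lemma lcoef0 p w : (forall e, e \in p -> freduce e.2 != w) -> lcoef p w = 0.
Proof.
elim: p => [|e p IH] H; first exact: lcoef_nil.
rewrite lcoef_cons (negbTE (H e (mem_head _ _))) add0r IH // => f hf.
by apply: H; rewrite in_cons hf orbT.
Qed.

Lemma lpeqbP p q : lpeqb p q -> leq_lp p q.
Proof.
move=> /allP H w.
case hw: (w \in [seq freduce e.2 | e <- p ++ q]).
  by rewrite !lcoefcE; apply/eqP; apply: H.
have nin r : {subset r <= p ++ q} -> lcoef r w = 0.
  move=> sub; apply: lcoef0 => e he; apply/eqP => ew.
  by move: hw; rewrite -ew (map_f (fun e : int * word => freduce e.2) (sub e he)).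
rewrite !nin // => e he; rewrite mem_cat he ?orbT //.
Qed.

Definition posl (p : lpoly) : bool := all (fun e => 0 <= e.1) p.

Lemma posl_add p q : posl p -> posl q -> posl (ladd p q).
Proof. by rewrite /posl /ladd all_cat => -> ->. Qed.

Lemma posl_mul p q : posl p -> posl q -> posl (lmul p q).
Proof.
move=> /allP hp /allP hq; apply/allP => z /allpairsP [[e f] [he hf ->]] /=.
by apply: mulr_ge0; [apply: hp | apply: hq].
Qed.

Lemma posl_nonneg p : posl p -> nonneg_lp p.
Proof.
elim: p => [|e p IH] /= H w; first by rewrite lcoef_nil.
case/andP: H => h1 h2; rewrite lcoef_cons; apply: addr_ge0; last exact: IH.
by case: ifP.
Qed.

Lemma st_pos n : posl (st n).1 && posl (st n).2.
Proof.
elim: n => [|n /andP [h1 h2]] //=.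
have hr : posl (ladd (lmul (st n).1 la) (st n).2) by apply: posl_add => //; apply: posl_mul.
rewrite hr /=; apply: posl_add; apply: posl_mul => //.
Qed.
End Comp.

Theorem corollary3p4 :
  exists P : nat -> lpoly,
    [/\ leq_lp (P 0%N) (lword [:: Y; X; Yi]),
        leq_lp (P 1%N) (lword [:: Y]),
        (forall n : nat,
           leq_lp (lmul (lmul (P n.+2) Cw) (P n))
                  (ladd (lmul (P n.+1) (P n.+1)) lone))
      & (forall n : nat, nonneg_lp (P n))].
Proof.
exists PP; split.
- by [].
- by apply: lpeqbP; vm_compute.
- apply: (@abstract_all KK Cw EE PP).
  + by apply: lpeqbP; vm_compute.
  + by apply: lpeqbP; vm_compute.
  + exact: PP_lin.
  + by apply: lpeqbP; vm_compute.
  + by apply: lpeqbP; vm_compute.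
  + by apply: lpeqbP; vm_compute.
- by move=> n; apply: posl_nonneg; case/andP: (st_pos n).
Qed.
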